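(* Let $X,Y$ be random variables with $P(X=k)=p_k\ge0$ and $P(Y=k)=q_k\ge0$ for $k=0,1,2,\dots$, with $q_k>0$ so that the ratios $p_k/q_k$ are defined. Let $L_X(x)=\sum_{k=0}^\infty p_ke^{-kx}$ and $L_Y(x)=\sum_{k=0}^\infty q_ke^{-kx}$ $(x>0)$. If one of the conditions (i) the sequence $\{p_k/q_k\}$ is increasing (resp. decreasing) for all $k\ge0$; (ii) there exists an integer $m\ge1$ such that $\{p_k/q_k\}$ is increasing (resp. decreasing) for $0\le k\le m$ and decreasing (resp. increasing) for $k\ge m$, and $H_{L_X,L_Y}(0^+)\ge0$ (resp. $\le0$); holds, then $Y\le_{Lt-r}X$ (resp. $X\le_{Lt-r}Y$).
   Context: For a random variable $Z\ge0$ with distribution function $F_Z$, its Laplace–Stieltjes transform is $L_Z(x)=\int_0^\infty e^{-tx}\,dF_Z(t)$, $x>0$. For random variables $X,Y\ge0$, $X\le_{Lt-r}Y$ (Laplace transform ratio order) means that $x\mapsto L_Y(x)/L_X(x)$ is decreasing on $(0,\infty)$. $H_{F,G}=\frac{F'}{G'}G-F$ and $H_{F,G}(0^+)=\lim_{x\to0^+}H_{F,G}(x)$. *)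

(* Defs.v *)
From Stdlib Require Import Reals.
From Coquelicot Require Import Coquelicot.
Open Scope R_scope.

Definition LT (p : nat -> R) (x : R) : R :=
  Series (fun k => p k * exp (- (INR k * x))).

Definition decreasing_pos (f : R -> R) : Prop :=
  forall x y, 0 < x -> x <= y -> f y <= f x.

(* Laplace transform ratio order: X <=_{Lt-r} Y iff L_Y / L_X decreasing on (0,oo). *)
Definition Ltr_le (p q : nat -> R) : Prop :=
  decreasing_pos (fun x => LT q x / LT p x).

Definition H_fun (F G : R -> R) (x : R) : R :=
  Derive F x / Derive G x * G x - F x.

Definition incr_on (a : nat -> R) (P : nat -> Prop) : Prop :=
  forall i j, P i -> P j -> (i <= j)%nat -> a i <= a j.
Definition decr_on (a : nat -> R) (P : nat -> Prop) : Prop :=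
  forall i j, P i -> P j -> (i <= j)%nat -> a j <= a i.

Definition pmf (p : nat -> R) : Prop :=
  (forall k, 0 <= p k) /\ is_series p 1.

(* Main.v *)
Require Import Defs.
From Stdlib Require Import Reals Lra Lia Classical Arith.
From Coquelicot Require Import Coquelicot.
Open Scope R_scope.

Lemma rad1 (a : nat -> R) : ex_series (fun n => Rabs (a n)) -> Rbar_le 1 (CV_radius a).
Proof.
  intros H. destruct (Rbar_le_dec 1 (CV_radius a)) as [h|h]; auto.
  exfalso. apply Rbar_not_le_lt in h.
  apply (CV_disk_outside a 1). rewrite Rabs_R1; auto.
  apply is_lim_seq_ext with (fun n => a n).
  intros n; rewrite pow1; ring.
  apply is_lim_seq_abs_0. apply ex_series_lim_0; auto.
Qed.

Lemma inside (a : nat -> R) t : Rbar_le 1 (CV_radius a) -> Rabs t < 1 ->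
  Rbar_lt (Rabs t) (CV_radius a).
Proof.
  intros H1 H2. eapply Rbar_lt_le_trans; [|exact H1]. simpl; auto.
Qed.

Lemma exps (a : nat -> R) t : Rbar_le 1 (CV_radius a) -> Rabs t < 1 ->
  ex_series (fun n => a n * t ^ n).
Proof.
  intros H1 H2. apply ex_pseries_R. apply CV_radius_inside. apply inside; auto.
Qed.

Lemma Series_nonneg (a : nat -> R) : (forall n, 0 <= a n) -> ex_series a -> 0 <= Series a.
Proof.
  intros H1 H2.
  assert (E : Series (fun n => 0 * a n) = 0) by (rewrite Series_scal_l; ring).
  rewrite <- E. apply Series_le; auto. intros n; split; [lra|]. rewrite Rmult_0_l; auto.
Qed.

Lemma cross_term (f : nat -> R) (K : nat) u v k :
  (forall k, (k<K)%nat -> 0 <= f k) -> (forall k, (K<k)%nat -> f k <= 0) -> 0 < u <= v ->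
  0 <= v^K * (f k * u^k) - u^K * (f k * v^k).
Proof.
  intros H1 H2 Huv.
  assert (Hu : 0 <= u^k) by (apply pow_le; lra).
  assert (Hv : 0 <= v^k) by (apply pow_le; lra).
  assert (HuK : 0 <= u^K) by (apply pow_le; lra).
  assert (HvK : 0 <= v^K) by (apply pow_le; lra).
  destruct (lt_eq_lt_dec k K) as [[h|h]|h].
  - replace K with (k + (K - k))%nat by lia. rewrite !pow_add.
    assert (0 <= v^(K-k) - u^(K-k)) by (assert (u^(K-k) <= v^(K-k)) by (apply pow_incr; lra); lra).
    specialize (H1 k h).
    replace (v ^ k * v ^ (K - k) * (f k * u ^ k) - u ^ k * u ^ (K - k) * (f k * v ^ k))
      with (f k * (u^k * v^k) * (v^(K-k) - u^(K-k))) by ring.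
    apply Rmult_le_pos; auto. apply Rmult_le_pos; auto. apply Rmult_le_pos; auto.
  - subst. lra.
  - replace k with (K + (k - K))%nat by lia. rewrite !pow_add.
    assert (0 <= v^(k-K) - u^(k-K)) by (assert (u^(k-K) <= v^(k-K)) by (apply pow_incr; lra); lra).
    specialize (H2 k h).
    replace (v ^ K * (f (K + (k - K))%nat * (u ^ K * u ^ (k - K))) -
      u ^ K * (f (K + (k - K))%nat * (v ^ K * v ^ (k - K))))
      with ((- f k) * (u^K * v^K) * (v^(k-K) - u^(k-K))).
    2:{ replace (K + (k - K))%nat with k by lia. ring. }
    apply Rmult_le_pos; auto. apply Rmult_le_pos; [lra|]. apply Rmult_le_pos; auto.
Qed.

Lemma cross (f : nat -> R) (K : nat) u v :
  (forall k, (k<K)%nat -> 0 <= f k) -> (forall k, (K<k)%nat -> f k <= 0) -> 0 < u <= v ->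
  ex_series (fun n => f n * u^n) -> ex_series (fun n => f n * v^n) ->
  u^K * PSeries f v <= v^K * PSeries f u.
Proof.
  intros H1 H2 Huv Eu Ev. unfold PSeries. rewrite <- !Series_scal_l.
  assert (Eu' : ex_series (fun n => v^K * (f n * u^n))) by (apply (ex_series_scal_l (V:=R_NormedModule)); auto).
  assert (Ev' : ex_series (fun n => u^K * (f n * v^n))) by (apply (ex_series_scal_l (V:=R_NormedModule)); auto).
  assert (0 <= Series (fun n => v^K * (f n * u^n) - u^K * (f n * v^n))).
  { apply Series_nonneg. intros; apply cross_term; auto.
    apply (ex_series_minus (V:=R_NormedModule)); auto. }
  rewrite Series_minus in H; auto. lra.
Qed.

Lemma PSeries_opp' (e : nat -> R) x : PSeries (fun k => - e k) x = - PSeries e x.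
Proof.
  unfold PSeries. rewrite (Series_ext _ (fun n => (-1) * (e n * x^n))).
  rewrite Series_scal_l; ring. intros; ring.
Qed.

Lemma ex_opp' (e : nat -> R) x : ex_series (fun n => e n * x^n) -> ex_series (fun n => - e n * x^n).
Proof.
  intros H. apply ex_series_ext with (fun n => (-1) * (e n * x^n)).
  2: apply (ex_series_scal_l (V:=R_NormedModule)); auto. intros; simpl; ring.
Qed.

Lemma mono_core (e : nat -> R) (k1 : nat) u v :
  (forall k, (k<k1)%nat -> e k <= 0) -> (forall k, (k1<k)%nat -> 0 <= e k) -> 0 < u <= v ->
  ex_series (fun n => e n * u^n) -> ex_series (fun n => e n * v^n) ->
  0 <= PSeries e u -> 0 <= PSeries e v.
Proof.
  intros H1 H2 Huv Eu Ev Hu.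
  pose proof (cross (fun k => - e k) k1 u v) as C.
  rewrite !PSeries_opp' in C.
  assert (0 < u^k1) by (apply pow_lt; lra).
  assert (0 < v^k1) by (apply pow_lt; lra).
  assert (u ^ k1 * - PSeries e v <= v ^ k1 * - PSeries e u).
  { apply C; auto. intros k h; specialize (H1 k h); lra. intros k h; specialize (H2 k h); lra.
    apply ex_opp'; auto. apply ex_opp'; auto. }
  nra.
Qed.

Lemma min_ex (P : nat -> Prop) n : P n -> exists j, P j /\ forall k, (k < j)%nat -> ~ P k.
Proof.
  induction n as [n IH] using lt_wf_ind. intros Hn.
  destruct (classic (exists k, (k < n)%nat /\ P k)) as [[k [hk pk]]|h].
  - apply (IH k hk pk).
  - exists n; split; auto. intros k hk pk; apply h; eauto.
Qed.

Definition SC (d : nat -> R) : Prop := forall j k, (j <= k)%nat -> d j < 0 -> d k <= 0.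

Lemma sc_series (d : nat -> R) t t' : SC d -> 0 < t <= t' ->
  ex_series (fun n => d n * t^n) -> ex_series (fun n => d n * t'^n) ->
  PSeries d t < 0 -> PSeries d t' < 0.
Proof.
  intros Hsc Ht Et Et' Hneg.
  destruct (classic (exists n, d n < 0)) as [[n hn]|hno].
  - destruct (min_ex (fun k => d k < 0) n hn) as [j0 [hj0 hmin]].
    pose proof (cross d (pred j0) t t') as C.
    assert (t^(pred j0) * PSeries d t' <= t'^(pred j0) * PSeries d t).
    { apply C; auto.
      - intros k hk. apply Rnot_lt_le. apply hmin. lia.
      - intros k hk. apply (Hsc j0 k); auto. lia. }
    assert (0 < t^(pred j0)) by (apply pow_lt; lra).
    assert (0 < t'^(pred j0)) by (apply pow_lt; lra).
    nra.
  - exfalso. assert (0 <= PSeries d t).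
    { unfold PSeries. apply Series_nonneg; auto. intros k.
      apply Rmult_le_pos. apply Rnot_lt_le; intros h; apply hno; eauto. apply pow_le; lra. }
    lra.
Qed.

Lemma mono_up f f' a b : a <= b -> (forall c, a <= c <= b -> is_derive f c (f' c)) ->
  (forall c, a < c < b -> 0 <= f' c) -> f a <= f b.
Proof.
  intros Hab Hd Hp. destruct (Req_dec a b) as [->|hne]; [lra|].
  destruct (MVT_cor2 f f' a b) as [c [Hc1 Hc2]]; [lra| |].
  - intros c hc. apply is_derive_Reals, Hd; auto.
  - specialize (Hp c Hc2). nra.
Qed.

Lemma mono_down f f' a b : a <= b -> (forall c, a <= c <= b -> is_derive f c (f' c)) ->
  (forall c, a < c < b -> f' c <= 0) -> f b <= f a.
Proof.
  intros Hab Hd Hp. destruct (Req_dec a b) as [->|hne]; [lra|].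
  destruct (MVT_cor2 f f' a b) as [c [Hc1 Hc2]]; [lra| |].
  - intros c hc. apply is_derive_Reals, Hd; auto.
  - specialize (Hp c Hc2). nra.
Qed.

Lemma kser (e : nat -> R) t : Rbar_le 1 (CV_radius e) -> Rabs t < 1 ->
  ex_series (fun n => (INR n * e n) * t^n) /\
  PSeries (fun n => INR n * e n) t = t * PSeries (PS_derive e) t.
Proof.
  intros H1 H2.
  assert (E : forall n, PS_incr_1 (PS_derive e) n = INR n * e n).
  { intros [|n]; simpl. unfold zero; simpl; ring. unfold PS_derive. reflexivity. }
  assert (Hr : Rbar_le 1 (CV_radius (PS_incr_1 (PS_derive e)))).
  { rewrite CV_radius_incr_1, CV_radius_derive; auto. }
  split.
  - apply ex_series_ext with (fun n => PS_incr_1 (PS_derive e) n * t^n).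
    intros n; rewrite E; auto. apply exps; auto.
  - rewrite <- PSeries_incr_1. unfold PSeries. apply Series_ext. intros n. rewrite E; auto.
Qed.

Lemma dser (e : nat -> R) (k1 : nat) t : Rbar_le 1 (CV_radius e) -> Rabs t < 1 ->
  ex_series (fun n => ((INR n - INR k1) * e n) * t^n) /\
  PSeries (fun n => (INR n - INR k1) * e n) t = t * PSeries (PS_derive e) t - INR k1 * PSeries e t.
Proof.
  intros H1 H2. destruct (kser e t H1 H2) as [K1 K2].
  pose proof (exps e t H1 H2) as K3.
  assert (K4 : ex_series (fun n => INR k1 * (e n * t^n))) by (apply (ex_series_scal_l (V:=R_NormedModule)); auto).
  split.
  - apply (ex_series_ext (V:=R_NormedModule) (fun n => (INR n * e n) * t^n - INR k1 * (e n * t^n))).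
    intros; simpl; ring. apply (ex_series_minus (V:=R_NormedModule)); auto.
  - rewrite <- K2. unfold PSeries.
    rewrite (Series_ext _ (fun n => (INR n * e n) * t^n - INR k1 * (e n * t^n))).
    rewrite Series_minus; auto. rewrite Series_scal_l. auto.
    intros; ring.
Qed.

Lemma PS_deriv (e : nat -> R) t : Rbar_le 1 (CV_radius e) -> Rabs t < 1 ->
  is_derive (PSeries e) t (PSeries (PS_derive e) t).
Proof. intros; apply is_derive_PSeries, inside; auto. Qed.

Lemma Qderiv (e : nat -> R) (k1 : nat) t : Rbar_le 1 (CV_radius e) -> 0 < t < 1 ->
  is_derive (fun x => PSeries e x / x^k1) t
    (PSeries (fun n => (INR n - INR k1) * e n) t / t^(S k1)).
Proof.
  intros H1 H2. assert (Ht : Rabs t < 1) by (rewrite Rabs_pos_eq; lra).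
  assert (Hp : is_derive (fun x => x ^ k1) t (INR k1 * 1 * t ^ pred k1)).
  { apply (is_derive_pow (fun x => x)). exact (is_derive_id (K:=R_AbsRing) t). }
  assert (tk : t ^ k1 <> 0) by (apply pow_nonzero; lra).
  pose proof (is_derive_div (PSeries e) (fun x => x ^ k1) t _ _ (PS_deriv e t H1 Ht) Hp tk) as D.
  replace (PSeries (fun n => (INR n - INR k1) * e n) t / t^(S k1)) with
    ((PSeries (PS_derive e) t * t ^ k1 - PSeries e t * (INR k1 * 1 * t ^ Init.Nat.pred k1)) / (t ^ k1) ^ 2); auto.
  destruct (dser e k1 t H1 Ht) as [_ ->].
  destruct k1 as [|k]; simpl pred.
  - simpl. field. lra.
  - rewrite S_INR. simpl. field. assert (t ^ k <> 0) by (apply pow_nonzero; lra). split; auto; lra.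
Qed.

Lemma qc_core (e : nat -> R) (k1 : nat) s u v : Rbar_le 1 (CV_radius e) ->
  SC (fun n => (INR n - INR k1) * e n) -> 0 < s < u -> u < v < 1 ->
  0 < PSeries e s -> 0 < PSeries e v -> 0 < PSeries e u.
Proof.
  intros H1 Hsc Hsu Huv Ps Pv.
  destruct (Rlt_or_le 0 (PSeries e u)) as [h|Pu]; auto. exfalso.
  set (d := fun n => (INR n - INR k1) * e n).
  set (Q := fun x => PSeries e x / x^k1).
  set (Q' := fun x => PSeries d x / x^(S k1)).
  assert (HQ : forall c, 0 < c < 1 -> is_derive Q c (Q' c)).
  { intros c hc. apply Qderiv; auto. }
  assert (Ab : forall c, 0 < c < 1 -> Rabs c < 1) by (intros c hc; rewrite Rabs_pos_eq; lra).
  assert (pk : forall c n, 0 < c -> 0 < c ^ n) by (intros; apply pow_lt; lra).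
  assert (Qs : 0 < Q s) by (unfold Q; apply Rdiv_lt_0_compat; auto; apply pk; lra).
  assert (Qv : 0 < Q v) by (unfold Q; apply Rdiv_lt_0_compat; auto; apply pk; lra).
  assert (Qu : Q u <= 0).
  { unfold Q. unfold Rdiv. apply Rmult_le_0_r; auto. left; apply Rinv_0_lt_compat, pk; lra. }
  destruct (classic (exists w, s < w < u /\ PSeries d w < 0)) as [[w [hw dw]]|hno].
  - assert (Q v <= Q u).
    { apply (mono_down Q Q'); [lra| |].
      - intros c hc; apply HQ; lra.
      - intros c hc. unfold Q'.
        assert (PSeries d c < 0).
        { apply (sc_series d w c); auto; try lra.
          apply (dser e k1 w H1); apply Ab; lra.
          apply (dser e k1 c H1); apply Ab; lra. }
        unfold Rdiv. apply Rmult_le_0_r. lra. left; apply Rinv_0_lt_compat, pk; lra. }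
    lra.
  - assert (Q s <= Q u).
    { apply (mono_up Q Q'); [lra| |].
      - intros c hc; apply HQ; lra.
      - intros c hc. unfold Q'.
        assert (0 <= PSeries d c).
        { apply Rnot_lt_le; intros h; apply hno; exists c; split; auto. }
        unfold Rdiv. apply Rmult_le_pos; auto. left; apply Rinv_0_lt_compat, pk; lra. }
    lra.
Qed.

Lemma pos_ser (c : nat -> R) t : (forall k, 0 < c k) -> 0 <= t ->
  ex_series (fun n => c n * t^n) -> 0 < PSeries c t.
Proof.
  intros H1 H2 H3. unfold PSeries. rewrite Series_incr_1; auto.
  assert (0 <= Series (fun k => c (S k) * t ^ (S k))).
  { apply Series_nonneg. intros; apply Rmult_le_pos; [left; auto|apply pow_le; auto].
    apply (ex_series_incr_1 (fun n => c n * t^n)); auto. }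
  simpl pow at 1. specialize (H1 0%nat). lra.
Qed.

Lemma rad_of_ex (e : nat -> R) : (forall t, 0 <= t < 1 -> ex_series (fun n => e n * t^n)) ->
  Rbar_le 1 (CV_radius e).
Proof.
  intros H. destruct (Rbar_le_dec 1 (CV_radius e)) as [h|h]; auto.
  exfalso. apply Rbar_not_le_lt in h. pose proof (CV_radius_ge_0 e) as h0.
  destruct (CV_radius e) as [r| |] eqn:Er; simpl in h, h0; try tauto.
  apply (CV_disk_outside e ((r+1)/2)).
  rewrite Er, Rabs_pos_eq; simpl; lra.
  apply ex_series_lim_0, H. lra.
Qed.

Lemma lin_ex (a b : nat -> R) c t : ex_series (fun n => a n * t^n) -> ex_series (fun n => b n * t^n) ->
  ex_series (fun n => (a n - c * b n) * t^n).
Proof.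
  intros Ha Hb.
  apply (ex_series_ext (V:=R_NormedModule) (fun n => a n * t^n - c * (b n * t^n))).
  intros; simpl; ring.
  apply (ex_series_minus (V:=R_NormedModule)); auto.
  apply (ex_series_scal_l (V:=R_NormedModule)); auto.
Qed.

Lemma lin_val (a b : nat -> R) c t : ex_series (fun n => a n * t^n) -> ex_series (fun n => b n * t^n) ->
  PSeries (fun n => a n - c * b n) t = PSeries a t - c * PSeries b t.
Proof.
  intros Ha Hb. unfold PSeries.
  rewrite (Series_ext _ (fun n => a n * t^n - c * (b n * t^n))).
  rewrite Series_minus; auto. rewrite Series_scal_l; auto.
  apply (ex_series_scal_l (V:=R_NormedModule)); auto.
  intros; ring.
Qed.

Lemma LD1 f x l y : is_derive f x l -> l < 0 -> x < y -> exists z, x < z < y /\ f z < f x.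
Proof.
  intros D hl hxy. apply is_derive_Reals in D.
  destruct (D (-l) ltac:(lra)) as [del Hd].
  set (h := Rmin (del/2) ((y-x)/2)).
  assert (h1 : 0 < h) by (unfold h; apply Rmin_pos; pose proof (cond_pos del); lra).
  assert (h2 : h <= del/2) by apply Rmin_l.
  assert (h3 : h <= (y-x)/2) by apply Rmin_r.
  pose proof (cond_pos del).
  specialize (Hd h ltac:(lra) ltac:(rewrite Rabs_pos_eq; lra)).
  apply Rabs_lt_between in Hd.
  exists (x+h). split; [lra|].
  assert ((f (x + h) - f x) / h < 0) by lra.
  assert (f (x+h) - f x < 0); [|lra].
  replace (f (x+h) - f x) with ((f (x + h) - f x) / h * h) by (field; lra). nra.
Qed.

Lemma LD2 f x l y : is_derive f x l -> 0 < l -> y < x -> exists z, y < z < x /\ f z < f x.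
Proof.
  intros D hl hxy. apply is_derive_Reals in D.
  destruct (D l ltac:(lra)) as [del Hd].
  set (h := Rmin (del/2) ((x-y)/2)).
  assert (h1 : 0 < h) by (unfold h; apply Rmin_pos; pose proof (cond_pos del); lra).
  assert (h2 : h <= del/2) by apply Rmin_l.
  assert (h3 : h <= (x-y)/2) by apply Rmin_r.
  pose proof (cond_pos del).
  specialize (Hd (-h) ltac:(lra) ltac:(rewrite Rabs_Ropp, Rabs_pos_eq; lra)).
  apply Rabs_lt_between in Hd.
  exists (x+-h). split; [lra|].
  assert (0 < (f (x + - h) - f x) / - h) by lra.
  assert (f (x+-h) - f x < 0); [|lra].
  replace (f (x+-h) - f x) with (- ((f (x + - h) - f x) / - h * h)) by (field; lra). nra.
Qed.

Lemma caseI (a b : nat -> R) : Rbar_le 1 (CV_radius a) -> Rbar_le 1 (CV_radius b) ->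
  (forall k, 0 < b k) -> (forall i j, (i <= j)%nat -> a i / b i <= a j / b j) ->
  forall u v, 0 < u <= v -> v < 1 -> PSeries a u / PSeries b u <= PSeries a v / PSeries b v.
Proof.
  intros Ra Rb bp Hr u v Huv Hv.
  assert (Ab : forall c, 0 <= c < 1 -> Rabs c < 1) by (intros c hc; rewrite Rabs_pos_eq; lra).
  assert (Bu : 0 < PSeries b u) by (apply pos_ser; auto; try lra; apply exps; auto; apply Ab; lra).
  assert (Bv : 0 < PSeries b v) by (apply pos_ser; auto; try lra; apply exps; auto; apply Ab; lra).
  set (c := PSeries a u / PSeries b u).
  set (e := fun n => a n - c * b n).
  assert (Ex : forall t, 0 <= t < 1 -> ex_series (fun n => e n * t^n)).
  { intros t ht. apply lin_ex; apply exps; auto. }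
  assert (Ev : forall t, 0 <= t < 1 -> PSeries e t = PSeries a t - c * PSeries b t).
  { intros t ht. apply lin_val; apply exps; auto. }
  assert (eE : forall k, e k = b k * (a k / b k - c)).
  { intros k; unfold e. field. specialize (bp k); lra. }
  assert (Pu : PSeries e u = 0).
  { rewrite Ev by lra. unfold c. field. lra. }
  destruct (classic (exists k, c <= a k / b k)) as [[k hk]|hno].
  - destruct (min_ex (fun k => c <= a k / b k) k hk) as [k1 [hk1 hmin]].
    assert (0 <= PSeries e v).
    { apply (mono_core e k1 u v); auto; try (apply Ex; lra); try lra.
      - intros j hj. rewrite eE. specialize (hmin j hj). specialize (bp j). nra.
      - intros j hj. rewrite eE. specialize (Hr k1 j ltac:(lia)). specialize (bp j). nra. }
    rewrite Ev in H by lra.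
    apply Rmult_le_reg_r with (PSeries b v); auto.
    replace (PSeries a v / PSeries b v * PSeries b v) with (PSeries a v) by (field; lra).
    fold c. lra.
  - exfalso.
    assert (0 < PSeries (fun n => - e n) u).
    { apply pos_ser; try lra. intros j. rewrite eE.
      assert (a j / b j < c) by (apply Rnot_le_lt; intros h; apply hno; eauto).
      specialize (bp j). nra.
      apply ex_opp'. apply Ex; lra. }
    rewrite PSeries_opp' in H. lra.
Qed.

Lemma dpos (b : nat -> R) : (forall k, 0 < b k) -> forall k, 0 < PS_derive b k.
Proof. intros bp k. unfold PS_derive. apply Rmult_lt_0_compat; auto. apply lt_0_INR; lia. Qed.

Lemma rdiv_d (a b : nat -> R) k : (forall k, 0 < b k) -> PS_derive a k / PS_derive b k = a (S k) / b (S k).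
Proof.
  intros bp. unfold PS_derive. field. split. specialize (bp (S k)); lra.
  apply not_0_INR; lia.
Qed.

Lemma gqc (a b : nat -> R) (m : nat) : Rbar_le 1 (CV_radius a) -> Rbar_le 1 (CV_radius b) ->
  (forall k, 0 < b k) ->
  (forall i j, (i <= j)%nat -> (j <= m)%nat -> a i / b i <= a j / b j) ->
  (forall i j, (m <= i)%nat -> (i <= j)%nat -> a j / b j <= a i / b i) ->
  forall s u v, 0 < s < u -> u < v < 1 ->
  let g := fun t => PSeries (PS_derive a) t / PSeries (PS_derive b) t in
  g u < g s -> g u < g v -> False.
Proof.
  intros Ra Rb bp Hi Hd s u v Hsu Huv g Gs Gv.
  set (a' := PS_derive a). set (b' := PS_derive b).
  assert (Ra' : Rbar_le 1 (CV_radius a')) by (unfold a'; rewrite CV_radius_derive; auto).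
  assert (Rb' : Rbar_le 1 (CV_radius b')) by (unfold b'; rewrite CV_radius_derive; auto).
  assert (bp' : forall k, 0 < b' k) by (apply dpos; auto).
  assert (Ab : forall c, 0 <= c < 1 -> Rabs c < 1) by (intros c hc; rewrite Rabs_pos_eq; lra).
  assert (Bp : forall t, 0 <= t < 1 -> 0 < PSeries b' t).
  { intros t ht. apply pos_ser; auto; try lra. apply exps; auto. }
  set (c := g u).
  set (e := fun n => a' n - c * b' n).
  assert (Ex : forall t, 0 <= t < 1 -> ex_series (fun n => e n * t^n)).
  { intros t ht. apply lin_ex; apply exps; auto. }
  assert (Ev : forall t, 0 <= t < 1 -> PSeries e t = PSeries a' t - c * PSeries b' t).
  { intros t ht. apply lin_val; apply exps; auto. }
  assert (Re : Rbar_le 1 (CV_radius e)) by (apply rad_of_ex; auto).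
  set (r := fun k => a k / b k).
  assert (eE : forall k, e k = b' k * (r (S k) - c)).
  { intros k; unfold e, r. rewrite <- (rdiv_d a b k bp). fold a' b'. field. specialize (bp' k); lra. }
  assert (Pg : forall t, 0 <= t < 1 -> PSeries e t = PSeries b' t * (g t - c)).
  { intros t ht. rewrite Ev by auto. unfold g. fold a' b'. field. specialize (Bp t ht); lra. }
  assert (Ps : 0 < PSeries e s) by (rewrite Pg by lra; apply Rmult_lt_0_compat; [apply Bp; lra|unfold c; lra]).
  assert (Pv : 0 < PSeries e v) by (rewrite Pg by lra; apply Rmult_lt_0_compat; [apply Bp; lra|unfold c; lra]).
  assert (Pu : PSeries e u = 0) by (rewrite Pg by lra; unfold c; ring).
  destruct (classic (exists k, c <= r (S k))) as [[k0 hk]|hno].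
  - destruct (min_ex (fun k => c <= r (S k)) k0 hk) as [k1 [hk1 hmin]].
    assert (0 < PSeries e u); [|lra].
    apply (qc_core e k1 s u v); auto.
    intros j k hjk hdj.
    destruct (lt_eq_lt_dec j k1) as [[h|h]|h].
    + exfalso. assert (r (S j) < c) by (apply Rnot_le_lt; apply hmin; auto).
      assert (INR j < INR k1) by (apply lt_INR; auto).
      rewrite eE in hdj. specialize (bp' j).
      assert (X: (INR j - INR k1) * (b' j * (r (S j) - c)) = (INR k1 - INR j) * (b' j * (c - r (S j)))) by ring.
      assert (0 < (INR k1 - INR j) * (b' j * (c - r (S j)))) by (apply Rmult_lt_0_compat; [lra| apply Rmult_lt_0_compat; lra]).
      lra.
    + subst. exfalso. rewrite Rminus_diag in hdj. lra.
    + assert (INR k1 < INR j) by (apply lt_INR; auto).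
      assert (INR k1 < INR k) by (apply lt_INR; lia).
      assert (hj : r (S j) < c).
      { rewrite eE in hdj. specialize (bp' j). apply Rnot_le_lt; intro h0.
        assert (0 <= (INR j - INR k1) * (b' j * (r (S j) - c))) by (apply Rmult_le_pos; [lra|apply Rmult_le_pos; lra]).
        lra. }
      assert (hk' : r (S k) <= r (S j)).
      { destruct (le_lt_dec (S j) m) as [h1|h1].
        - exfalso. assert (r (S k1) <= r (S j)) by (apply Hi; lia). lra.
        - apply Hd; lia. }
      rewrite eE. specialize (bp' k).
      assert (0 <= (INR k - INR k1) * (b' k * (c - r (S k)))) by (apply Rmult_le_pos; [lra|apply Rmult_le_pos; lra]).
      assert (X: (INR k - INR k1) * (b' k * (r (S k) - c)) = - ((INR k - INR k1) * (b' k * (c - r (S k))))) by ring.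
      lra.
  - assert (0 < PSeries (fun n => - e n) s).
    { apply pos_ser; try lra. intros j. rewrite eE.
      assert (r (S j) < c) by (apply Rnot_le_lt; intros h; apply hno; eauto).
      specialize (bp' j). nra.
      apply ex_opp'. apply Ex; lra. }
    rewrite PSeries_opp' in H. lra.
Qed.

Lemma caseII (a b : nat -> R) (m : nat) : Rbar_le 1 (CV_radius a) -> Rbar_le 1 (CV_radius b) ->
  (forall k, 0 < b k) -> (1 <= m)%nat ->
  (forall i j, (i <= j)%nat -> (j <= m)%nat -> a i / b i <= a j / b j) ->
  (forall i j, (m <= i)%nat -> (i <= j)%nat -> a j / b j <= a i / b i) ->
  (forall eps, 0 < eps -> exists del, 0 < del /\ forall t, 1 - del < t < 1 ->
     - eps < PSeries (PS_derive a) t / PSeries (PS_derive b) t * PSeries b t - PSeries a t) ->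
  forall u v, 0 < u <= v -> v < 1 -> PSeries a u / PSeries b u <= PSeries a v / PSeries b v.
Proof.
  intros Ra Rb bp Hm Hi Hd LP.
  pose proof (gqc a b m Ra Rb bp Hi Hd) as QC. simpl in QC.
  assert (Ab : forall c, 0 <= c < 1 -> Rabs c < 1) by (intros c hc; rewrite Rabs_pos_eq; lra).
  assert (Ra1 : Rbar_le 1 (CV_radius (PS_derive a))) by (rewrite CV_radius_derive; auto).
  assert (Rb1 : Rbar_le 1 (CV_radius (PS_derive b))) by (rewrite CV_radius_derive; auto).
  assert (Bp : forall t, 0 <= t < 1 -> 0 < PSeries b t).
  { intros t ht. apply pos_ser; auto; try lra. apply exps; auto. }
  assert (B1p : forall t, 0 <= t < 1 -> 0 < PSeries (PS_derive b) t).
  { intros t ht. apply pos_ser; auto; try lra. apply dpos; auto. apply exps; auto. }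
  pose (A := PSeries a). pose (B := PSeries b).
  pose (A1 := PSeries (PS_derive a)). pose (B1 := PSeries (PS_derive b)).
  pose (A2 := PSeries (PS_derive (PS_derive a))). pose (B2 := PSeries (PS_derive (PS_derive b))).
  pose (g := fun t => A1 t / B1 t).
  pose (g' := fun t => (A2 t * B1 t - A1 t * B2 t) / (B1 t)^2).
  pose (Ht := fun t => g t * B t - A t).
  pose (Ht' := fun t => g' t * B t).
  assert (dA : forall t, 0 <= t < 1 -> is_derive A t (A1 t)) by (intros; apply PS_deriv; auto).
  assert (dB : forall t, 0 <= t < 1 -> is_derive B t (B1 t)) by (intros; apply PS_deriv; auto).
  assert (dA1 : forall t, 0 <= t < 1 -> is_derive A1 t (A2 t)) by (intros; apply PS_deriv; auto).
  assert (dB1 : forall t, 0 <= t < 1 -> is_derive B1 t (B2 t)) by (intros; apply PS_deriv; auto).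
  assert (dg : forall t, 0 <= t < 1 -> is_derive g t (g' t)).
  { intros t ht. unfold g, g'. apply is_derive_div; auto. specialize (B1p t ht). unfold B1; lra. }
  assert (dH : forall t, 0 <= t < 1 -> is_derive Ht t (Ht' t)).
  { intros t ht.
    assert (D : is_derive Ht t (g' t * B t + g t * B1 t - A1 t)).
    { apply (is_derive_minus (fun t => g t * B t) A). apply (is_derive_mult g B); auto.
      intros; apply Rmult_comm. auto. }
    replace (Ht' t) with (g' t * B t + g t * B1 t - A1 t); auto.
    unfold Ht', g. field. specialize (B1p t ht). unfold B1; lra. }
  assert (Dp : forall s w, 0 < s < w -> w < 1 -> g' s < 0 -> g' w <= 0).
  { intros s w hs hw gs. apply Rnot_lt_le; intros gw.
    destruct (LD1 g s (g' s) w (dg s ltac:(lra)) gs ltac:(lra)) as [z1 [hz1 gz1]].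
    destruct (LD2 g w (g' w) z1 (dg w ltac:(lra)) gw ltac:(lra)) as [z2 [hz2 gz2]].
    assert (g w <= g z1).
    { apply Rnot_lt_le; intros h. apply (QC s z1 w); [lra|lra|exact gz1|exact h]. }
    apply (QC s z2 w); [lra|lra| |exact gz2]. unfold g, A1, B1 in gz1, gz2, H. lra. }
  assert (H0 : 0 <= Ht 0).
  { unfold Ht, g, A, B, A1, B1. rewrite !PSeries_0. unfold PS_derive.
    specialize (Hi 0%nat 1%nat ltac:(lia) Hm). specialize (bp 0%nat) as b0. specialize (bp 1%nat) as b1.
    simpl INR.
    replace (1 * a 1%nat / (1 * b 1%nat) * b 0%nat - a 0%nat) with (b 0%nat * (a 1%nat / b 1%nat - a 0%nat / b 0%nat)) by (field; lra).
    apply Rmult_le_pos; lra. }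
  assert (Hpos : forall t0, 0 < t0 < 1 -> 0 <= Ht t0).
  { intros t0 ht0. apply Rnot_lt_le; intros hneg.
    destruct (classic (exists s, 0 < s < t0 /\ g' s < 0)) as [[s [hs gs]]|hno].
    - destruct (LP (- Ht t0) ltac:(lra)) as [del [hdel Hdel]].
      set (t := Rmax t0 (1 - del/2)).
      assert (t1 : t0 <= t) by apply Rmax_l.
      assert (t2 : 1 - del/2 <= t) by apply Rmax_r.
      assert (t3 : t < 1) by (unfold t; apply Rmax_lub_lt; lra).
      assert (Ht t <= Ht t0).
      { apply (mono_down Ht Ht'); auto.
        - intros c hc; apply dH; lra.
        - intros c hc. unfold Ht'. specialize (Dp s c ltac:(lra) ltac:(lra) gs).
          specialize (Bp c ltac:(lra)). unfold B. nra. }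
      specialize (Hdel t ltac:(lra)). fold A B A1 B1 in Hdel.
      assert (Ht t = A1 t / B1 t * B t - A t) by reflexivity. lra.
    - assert (Ht 0 <= Ht t0).
      { apply (mono_up Ht Ht'); [lra| |].
        - intros c hc; apply dH; lra.
        - intros c hc. unfold Ht'.
          assert (0 <= g' c) by (apply Rnot_lt_le; intros h; apply hno; exists c; split; [lra|auto]).
          specialize (Bp c ltac:(lra)). unfold B. nra. }
      lra. }
  intros u v Huv Hv.
  pose (F' := fun t => (A1 t * B t - A t * B1 t) / (B t)^2).
  apply (mono_up (fun t => A t / B t) F'); [lra| |].
  - intros c hc. apply is_derive_div; auto. apply dA; lra. apply dB; lra.
    specialize (Bp c ltac:(lra)). unfold B; lra.
  - intros c hc. unfold F'.
    specialize (Hpos c ltac:(lra)). specialize (Bp c ltac:(lra)). specialize (B1p c ltac:(lra)).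
    replace (A1 c * B c - A c * B1 c) with (Ht c * B1 c).
    2:{ unfold Ht, g. field. unfold B1; lra. }
    apply Rmult_le_pos. apply Rmult_le_pos; auto. unfold B1; lra.
    left. apply Rinv_0_lt_compat. apply pow_lt. unfold B; lra.
Qed.

Lemma ser_ge_term (a : nat -> R) k : (forall n, 0 <= a n) -> ex_series a -> a k <= Series a.
Proof.
  intros H1 H2. rewrite (Series_incr_n a (S k)) by (auto; lia). simpl pred.
  assert (0 <= Series (fun j => a (S k + j)%nat)).
  { apply Series_nonneg; auto. apply (ex_series_incr_n a (S k)); auto. }
  destruct k as [|k]; simpl in *; [lra|].
  pose proof (cond_pos_sum a k H1). lra.
Qed.

Lemma ball_R (x e y : R) : Rabs (y - x) < e -> ball x e y.
Proof. intros h. exact h. Qed.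

Lemma lim_lower (H : R -> R) (l : Rbar) : filterlim H (at_right 0) (Rbar_locally l) -> Rbar_le 0 l ->
  forall eps, 0 < eps -> exists del, 0 < del /\ forall x, 0 < x < del -> - eps < H x.
Proof.
  intros F hl eps he.
  assert (N : Rbar_locally l (fun y => - eps < y)).
  { destruct l as [r| |]; simpl in hl |- *; try tauto.
    - exists (mkposreal eps he). intros y hy. apply Rabs_lt_between in hy. simpl in hy. unfold minus, plus, opp in hy; simpl in hy. lra.
    - exists 0. intros; lra. }
  specialize (F _ N). destruct F as [del Hd].
  exists del. split; [apply cond_pos|]. intros x hx. apply Hd; [|lra].
  apply ball_R. rewrite Rminus_0_r, Rabs_pos_eq; lra.
Qed.

Lemma lim_upper (H : R -> R) (l : Rbar) : filterlim H (at_right 0) (Rbar_locally l) -> Rbar_le l 0 ->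
  forall eps, 0 < eps -> exists del, 0 < del /\ forall x, 0 < x < del -> H x < eps.
Proof.
  intros F hl eps he.
  assert (N : Rbar_locally l (fun y => y < eps)).
  { destruct l as [r| |]; simpl in hl |- *; try tauto.
    - exists (mkposreal eps he). intros y hy. apply Rabs_lt_between in hy. simpl in hy. unfold minus, plus, opp in hy; simpl in hy. lra.
    - exists 0. intros; lra. }
  specialize (F _ N). destruct F as [del Hd].
  exists del. split; [apply cond_pos|]. intros x hx. apply Hd; [|lra].
  apply ball_R. rewrite Rminus_0_r, Rabs_pos_eq; lra.
Qed.

Lemma exp_k x k : exp (-(INR k * x)) = exp (-x) ^ k.
Proof.
  induction k as [|k IH].
  - simpl. replace (-(0*x)) with 0 by ring. apply exp_0.
  - rewrite S_INR. replace (-((INR k + 1) * x)) with (-(INR k * x) + -x) by ring.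
    rewrite exp_plus, IH. simpl. ring.
Qed.

Lemma LT_eq p x : LT p x = PSeries p (exp (-x)).
Proof. unfold LT, PSeries. apply Series_ext. intros n. rewrite exp_k. auto. Qed.

Lemma exp_in x : 0 < x -> 0 < exp (-x) < 1.
Proof. intros h. split. apply exp_pos. rewrite <- exp_0. apply exp_increasing. lra. Qed.

Lemma exp_le' x y : x <= y -> exp (-y) <= exp (-x).
Proof. intros h. destruct (Req_dec x y) as [->|hn]; [lra|]. left; apply exp_increasing; lra. Qed.

Lemma DLT p x : Rbar_le 1 (CV_radius p) -> 0 < x ->
  Derive (LT p) x = - exp (-x) * PSeries (PS_derive p) (exp (-x)).
Proof.
  intros Rp hx. rewrite (Derive_ext _ (fun y => PSeries p (exp (-y)))) by (intros; apply LT_eq).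
  apply is_derive_unique.
  assert (De : is_derive (fun y => exp (-y)) x (- exp (-x))).
  { auto_derive; auto. ring. }
  pose proof (exp_in x hx) as E.
  pose proof (is_derive_comp (PSeries p) (fun y => exp (-y)) x _ _
     (PS_deriv p (exp (-x)) Rp ltac:(rewrite Rabs_pos_eq; lra)) De) as D.
  exact D.
Qed.

Lemma Hval p q x : Rbar_le 1 (CV_radius p) -> Rbar_le 1 (CV_radius q) -> (forall k, 0 < q k) -> 0 < x ->
  H_fun (LT p) (LT q) x =
  PSeries (PS_derive p) (exp (-x)) / PSeries (PS_derive q) (exp (-x)) * PSeries q (exp (-x))
   - PSeries p (exp (-x)).
Proof.
  intros Rp Rq qp hx. unfold H_fun. rewrite !DLT, !LT_eq; auto.
  pose proof (exp_in x hx) as E.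
  assert (0 < PSeries (PS_derive q) (exp (-x))).
  { apply pos_ser; [apply dpos; auto|lra|]. apply exps. rewrite CV_radius_derive; auto.
    rewrite Rabs_pos_eq; lra. }
  field. lra.
Qed.

Lemma LP_of (Ht : R -> R) (H : R -> R) :
  (forall x, 0 < x -> H x = Ht (exp (-x))) ->
  (forall eps, 0 < eps -> exists del, 0 < del /\ forall x, 0 < x < del -> - eps < H x) ->
  forall eps, 0 < eps -> exists del, 0 < del /\ forall t, 1 - del < t < 1 -> - eps < Ht t.
Proof.
  intros HE L eps he. destruct (L eps he) as [d [hd Hd]].
  exists (1 - exp (-d)). split. pose proof (exp_in d hd); lra.
  intros t ht. pose proof (exp_pos (-d)).
  assert (tp : 0 < t) by lra.
  assert (l1 : ln t < 0) by (rewrite <- ln_1; apply ln_increasing; lra).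
  assert (l2 : -d < ln t) by (rewrite <- (ln_exp (-d)); apply ln_increasing; lra).
  specialize (Hd (- ln t) ltac:(lra)). rewrite HE in Hd by lra.
  rewrite Ropp_involutive, exp_ln in Hd by lra. auto.
Qed.

Lemma rad_pmf p : pmf p -> Rbar_le 1 (CV_radius p) /\ Rbar_le 1 (CV_radius (fun k => - p k)).
Proof.
  intros [h0 h1]. assert (E : ex_series p) by (exists 1; auto).
  split; apply rad1; apply (ex_series_ext (V:=R_NormedModule) p); auto; intros n; simpl.
  rewrite Rabs_pos_eq; auto. rewrite Rabs_Ropp, Rabs_pos_eq; auto.
Qed.

Lemma A_pos p t : pmf p -> 0 < t < 1 -> 0 < PSeries p t.
Proof.
  intros Hp ht. destruct (rad_pmf p Hp) as [Rp _]. destruct Hp as [h0 h1].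
  destruct (classic (exists k, 0 < p k)) as [[k hk]|hno].
  - unfold PSeries. eapply Rlt_le_trans; [|apply (ser_ge_term _ k)].
    apply Rmult_lt_0_compat; auto. apply pow_lt; lra.
    intros; apply Rmult_le_pos; auto; apply pow_le; lra.
    apply exps; auto. rewrite Rabs_pos_eq; lra.
  - exfalso. apply is_series_unique in h1.
    rewrite (Series_ext _ (fun n => 0 * p n)) in h1.
    rewrite Series_scal_l in h1. lra.
    intros n. specialize (h0 n). assert (~ 0 < p n) by (intros h; apply hno; eauto). nra.
Qed.

Theorem theorem3 (p q : nat -> R) :
  pmf p -> pmf q -> (forall k, 0 < q k) ->
  let r := fun k => p k / q k in
  let H := H_fun (LT p) (LT q) in
  ( ( incr_on r (fun _ => True)
      \/ exists m : nat, (1 <= m)%nat /\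
           incr_on r (fun k => (k <= m)%nat) /\ decr_on r (fun k => (m <= k)%nat) /\
           exists l : Rbar, filterlim H (at_right 0) (Rbar_locally l) /\ Rbar_le 0 l )
    -> Ltr_le q p )
  /\
  ( ( decr_on r (fun _ => True)
      \/ exists m : nat, (1 <= m)%nat /\
           decr_on r (fun k => (k <= m)%nat) /\ incr_on r (fun k => (m <= k)%nat) /\
           exists l : Rbar, filterlim H (at_right 0) (Rbar_locally l) /\ Rbar_le l 0 )
    -> Ltr_le p q ).
Proof.
  intros Hp Hq qp r H.
  destruct (rad_pmf p Hp) as [Rp Rp'].
  destruct (rad_pmf q Hq) as [Rq _].
  assert (Hv : forall x, 0 < x -> H x =
    PSeries (PS_derive p) (exp (-x)) / PSeries (PS_derive q) (exp (-x)) * PSeries q (exp (-x))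
     - PSeries p (exp (-x))) by (intros; apply Hval; auto).
  split.
  - intros Hc.
    assert (M : forall u v, 0 < u <= v -> v < 1 -> PSeries p u / PSeries q u <= PSeries p v / PSeries q v).
    { destruct Hc as [Hi | [m [hm [Hi [Hd [l [Hl Hle]]]]]]].
      - apply caseI; auto. intros i j hij. apply (Hi i j); auto.
      - apply (caseII p q m); auto.
        + intros i j hij hjm. apply (Hi i j); auto. lia.
        + intros i j hmi hij. apply (Hd i j); auto. lia.
        + apply (LP_of _ H); auto. apply (lim_lower H l); auto. }
    intros x y hx hxy. rewrite !LT_eq.
    pose proof (exp_in x hx). pose proof (exp_in y ltac:(lra)). pose proof (exp_le' x y hxy).
    apply M; lra.
  - intros Hc.
    assert (M : forall u v, 0 < u <= v -> v < 1 ->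
      PSeries (fun k => - p k) u / PSeries q u <= PSeries (fun k => - p k) v / PSeries q v).
    { assert (Er : forall k, - p k / q k = - r k) by (intros; unfold r; field; specialize (qp k); lra).
      destruct Hc as [Hd | [m [hm [Hd [Hi [l [Hl Hle]]]]]]].
      - apply caseI; auto. intros i j hij. rewrite !Er. specialize (Hd i j I I hij). lra.
      - apply (caseII (fun k => - p k) q m); auto.
        + intros i j hij hjm. rewrite !Er. specialize (Hd i j ltac:(simpl; lia) hjm hij). lra.
        + intros i j hmi hij. rewrite !Er. specialize (Hi i j hmi ltac:(simpl; lia) hij). lra.
        + apply (LP_of _ (fun x => - H x)).
          * intros x hx. rewrite Hv by auto. rewrite !PSeries_opp'.
            replace (PSeries (PS_derive (fun k => - p k)) (exp (- x))) with
              (- PSeries (PS_derive p) (exp (-x))). unfold Rdiv; ring.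
            rewrite <- PSeries_opp'. unfold PSeries. apply Series_ext. intros n. unfold PS_derive. ring.
          * intros eps he. destruct (lim_upper H l Hl Hle eps he) as [d [hd Hd']].
            exists d; split; auto. intros x hx. specialize (Hd' x hx). lra. }
    intros x y hx hxy. rewrite !LT_eq.
    pose proof (exp_in x hx). pose proof (exp_in y ltac:(lra)). pose proof (exp_le' x y hxy).
    specialize (M (exp (-y)) (exp (-x)) ltac:(lra) ltac:(lra)). rewrite !PSeries_opp' in M.
    assert (Ax : 0 < PSeries p (exp (-x))) by (apply A_pos; auto).
    assert (Ay : 0 < PSeries p (exp (-y))) by (apply A_pos; auto).
    assert (Bx : 0 < PSeries q (exp (-x))) by (apply A_pos; auto).
    assert (By : 0 < PSeries q (exp (-y))) by (apply A_pos; auto).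
    set (a1 := PSeries p (exp (-x))) in *. set (a2 := PSeries p (exp (-y))) in *.
    set (b1 := PSeries q (exp (-x))) in *. set (b2 := PSeries q (exp (-y))) in *.
    assert (a1 * b2 <= a2 * b1).
    { apply Rmult_le_reg_r with (/ (b1 * b2)).
      apply Rinv_0_lt_compat; nra.
      replace (a1 * b2 * / (b1 * b2)) with (a1 / b1) by (field; lra).
      replace (a2 * b1 * / (b1 * b2)) with (a2 / b2) by (field; lra).
      replace (- a2 / b2) with (- (a2 / b2)) in M by (field; lra).
      replace (- a1 / b1) with (- (a1 / b1)) in M by (field; lra). lra. }
    apply Rmult_le_reg_r with (a1 * a2). nra.
    replace (b2 / a2 * (a1 * a2)) with (a1 * b2) by (field; lra).
    replace (b1 / a1 * (a1 * a2)) with (a2 * b1) by (field; lra). lra.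
Qed.
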